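(* Let $1<\beta<2$, $m_{-1}=0$ and $m_p=T_\beta^p(\beta/2)$ for $p\ge0$, and assume the points $m_{-1},m_0,m_1,\dots$ are pairwise distinct. Define $\psi_0=(\beta/2)^{-1/2}\mathbf 1_{[0,\beta/2]}$, and for $p\ge1$ let $m_l=\max\{m_j:-1\le j<p,\ m_j<m_p\}$, $m_u=\min\{m_j:-1\le j<p,\ m_j>m_p\}$, $C_p=\sqrt{\frac{(m_p-m_l)(m_u-m_p)}{m_u-m_l}}$, and $$\psi_p(x)=\begin{cases}C_p/(m_p-m_l)&m_l\le x\le m_p\\ -C_p/(m_u-m_p)& m_p<x\le m_u\\ 0&\text{otherwise on }[0,1].\end{cases}$$ Then $\{\psi_p\}_{p\ge0}$ is an orthonormal family in $L^2[0,1]$, and the matrix elements $\langle n|\mathcal L_\beta|m\rangle=\int_0^1\psi_n(x)[\mathcal L_\beta\psi_m](x)\,dx$ satisfy $\langle n|\mathcal L_\beta|m\rangle=0$ whenever $n>m+1$ (upper Hessenberg form).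
   Context: $T_\beta(x)=\beta x$ for $0\le x<\tfrac12$, $T_\beta(x)=\beta(x-\tfrac12)$ for $\tfrac12\le x\le1$. The transfer operator is $[\mathcal L_\beta f](y)=\frac1\beta\left[f\!\left(\frac y\beta\right)+f\!\left(\frac y\beta+\frac12\right)\right]$ for $0\le y\le\beta/2$ and $[\mathcal L_\beta f](y)=0$ for $\beta/2<y\le1$. (Note $m_p\in(0,\beta/2)$ for $p\ge1$ under the distinctness assumption, so $m_l,m_u$ exist.) *)

(* Defs.v *)
From Stdlib Require Import Reals Lra List.
Import ListNotations.
Open Scope R_scope.

Definition Tb (beta x : R) : R :=
  if Rlt_dec x (1/2) then beta * x else beta * (x - 1/2).

Definition mpt (beta : R) (p : nat) : R := Nat.iter p (Tb beta) (beta / 2).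

(* The points m_j, -1 <= j < p : 0 together with m_0, ..., m_{p-1}. *)
Definition cands (beta : R) (p : nat) : list R := 0 :: map (mpt beta) (seq 0 p).

(* m_l = max { m_j : -1 <= j < p, m_j < m_p } (default 0 if the set is empty) *)
Definition m_low (beta : R) (p : nat) : R :=
  match fold_right (fun x acc =>
          if Rlt_dec x (mpt beta p) then
            match acc with None => Some x | Some a => Some (Rmax x a) end
          else acc) None (cands beta p) with
  | Some a => a | None => 0 end.

(* m_u = min { m_j : -1 <= j < p, m_j > m_p } (default 1 if the set is empty) *)
Definition m_up (beta : R) (p : nat) : R :=
  match fold_right (fun x acc =>
          if Rlt_dec (mpt beta p) x then
            match acc with None => Some x | Some a => Some (Rmin x a) end
          else acc) None (cands beta p) with
  | Some a => a | None => 1 end.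

Definition Cp (beta : R) (p : nat) : R :=
  let ml := m_low beta p in let mu := m_up beta p in let mp := mpt beta p in
  sqrt ((mp - ml) * (mu - mp) / (mu - ml)).

Definition psi (beta : R) (p : nat) (x : R) : R :=
  match p with
  | O => if Rle_dec 0 x then if Rle_dec x (beta / 2) then / sqrt (beta / 2) else 0 else 0
  | S _ =>
    let ml := m_low beta p in let mu := m_up beta p in let mp := mpt beta p in
    if Rle_dec 0 x then if Rle_dec x 1 then
      if Rle_dec ml x then
        if Rle_dec x mp then Cp beta p / (mp - ml)
        else if Rle_dec x mu then - (Cp beta p / (mu - mp)) else 0
      else 0
    else 0 else 0
  end.

Definition Lb (beta : R) (f : R -> R) (y : R) : R :=
  if Rle_dec 0 y then
    if Rle_dec y (beta / 2) then / beta * (f (y / beta) + f (y / beta + 1/2)) else 0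
  else 0.

(* Main.v *)
Require Import Defs.
From Stdlib Require Import Reals Lra List Lia.
From Coquelicot Require Import Coquelicot.
Import ListNotations.
Open Scope R_scope.

Lemma fin_int (f : R -> R) v : is_RInt f 0 1 v ->
  exists pr : Riemann_integrable f 0 1, RiemannInt pr = v.
Proof.
  intros H. exists (ex_RInt_Reals_0 f 0 1 (ex_intro _ v H)).
  rewrite <- RInt_Reals. now apply is_RInt_unique.
Qed.

Lemma int_const (f : R -> R) a b c : a <= b -> (forall x, a < x < b -> f x = c) ->
  is_RInt f a b (c * (b - a)).
Proof.
  intros Hab H. apply is_RInt_ext with (fun _ => c).
  - intros x. rewrite (Rmin_left a b Hab), (Rmax_right a b Hab). intros Hx; symmetry; now apply H.
  - replace (c * (b - a)) with (scal (b - a) c). apply (@is_RInt_const R_NormedModule).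
    unfold scal; simpl; unfold mult; simpl; ring.
Qed.

Lemma chasles (f : R -> R) a b c l1 l2 l : is_RInt f a b l1 -> is_RInt f b c l2 ->
  l = l1 + l2 -> is_RInt f a c l.
Proof. intros H1 H2 ->. exact (is_RInt_Chasles f a b c l1 l2 H1 H2). Qed.

Lemma if_iff (P Q : Prop) (d1 : {P} + {~P}) (d2 : {Q} + {~Q}) (A B : R) :
  (P <-> Q) -> (if d1 then A else B) = (if d2 then A else B).
Proof. intros H; destruct d1, d2; tauto. Qed.

Lemma side_l s a b x y : (s <= a \/ b <= s) -> a < x < b -> a < y < b -> (s <= x <-> s <= y).
Proof. intros; split; intros; lra. Qed.
Lemma side_r s a b x y : (s <= a \/ b <= s) -> a < x < b -> a < y < b -> (x <= s <-> y <= s).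
Proof. intros; split; intros; lra. Qed.

Definition stepw (S : list R) (g : R -> R) := forall a b, a < b ->
  (forall s, In s S -> s <= a \/ b <= s) -> exists c, forall x, a < x < b -> g x = c.

Definition fl (v : R) := fold_right (fun x acc =>
          if Rlt_dec x v then
            match acc with None => Some x | Some a => Some (Rmax x a) end
          else acc) None.
Definition fu (v : R) := fold_right (fun x acc =>
          if Rlt_dec v x then
            match acc with None => Some x | Some a => Some (Rmin x a) end
          else acc) None.

Lemma fl_spec v l : match fl v l with None => forall x, In x l -> ~ x < v
  | Some a => In a l /\ a < v /\ forall x, In x l -> x < v -> x <= a end.
Proof.
  induction l as [|y l IH]; simpl; auto.
  destruct (Rlt_dec y v) as [Hy|Hy]; destruct (fl v l) as [a|] eqn:E.
  - destruct IH as (H1 & H2 & H3). unfold Rmax; destruct (Rle_dec y a).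
    + split; [auto|split;[auto|]]. intros x [<-|Hx] Hxv; auto; lra.
    + split; [auto|split;[auto|]]. intros x [<-|Hx] Hxv; [lra|]. specialize (H3 x Hx Hxv); lra.
  - split; [auto|split;[auto|]]. intros x [<-|Hx] Hxv; [lra|]. exfalso; exact (IH x Hx Hxv).
  - destruct IH as (H1 & H2 & H3). split; [auto|split;[auto|]]. intros x [<-|Hx] Hxv; [tauto|auto].
  - intros x [<-|Hx]; auto.
Qed.

Lemma fu_spec v l : match fu v l with None => forall x, In x l -> ~ v < x
  | Some a => In a l /\ v < a /\ forall x, In x l -> v < x -> a <= x end.
Proof.
  induction l as [|y l IH]; simpl; auto.
  destruct (Rlt_dec v y) as [Hy|Hy]; destruct (fu v l) as [a|] eqn:E.
  - destruct IH as (H1 & H2 & H3). unfold Rmin; destruct (Rle_dec y a).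
    + split; [auto|split;[auto|]]. intros x [<-|Hx] Hxv; [lra|]. specialize (H3 x Hx Hxv); lra.
    + split; [auto|split;[auto|]]. intros x [<-|Hx] Hxv; auto; lra.
  - split; [auto|split;[auto|]]. intros x [<-|Hx] Hxv; [lra|]. exfalso; exact (IH x Hx Hxv).
  - destruct IH as (H1 & H2 & H3). split; [auto|split;[auto|]]. intros x [<-|Hx] Hxv; [tauto|auto].
  - intros x [<-|Hx]; auto.
Qed.

Lemma in_cands beta p x : In x (cands beta p) <-> x = 0 \/ exists j, (j < p)%nat /\ x = mpt beta j.
Proof.
  unfold cands; simpl. rewrite in_map_iff. split.
  - intros [H|(j & Hj & Hin)]; [left; auto|right; exists j; rewrite in_seq in Hin; split; [lia|auto]].
  - intros [H|(j & Hj & ->)]; [left; auto|right; exists j; rewrite in_seq; split; [auto|lia]].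
Qed.
Section S.
Variable beta : R.
Hypothesis hb1 : 1 < beta.
Hypothesis hb2 : beta < 2.
Hypothesis hdist0 : forall p : nat, mpt beta p <> 0.
Hypothesis hdist : forall i j : nat, i <> j -> mpt beta i <> mpt beta j.

Lemma mpt_S p : mpt beta (S p) = Tb beta (mpt beta p).
Proof. reflexivity. Qed.

Lemma mpt_range p : 0 <= mpt beta p <= beta / 2.
Proof.
  induction p as [|p IH]; [unfold mpt; simpl; lra|].
  rewrite mpt_S; unfold Tb. destruct (Rlt_dec (mpt beta p) (1/2)); nra.
Qed.

Lemma mpt_pos p : 0 < mpt beta p.
Proof. destruct (mpt_range p). specialize (hdist0 p). lra. Qed.

Lemma cands_range p x : In x (cands beta p) -> 0 <= x <= beta / 2.
Proof. rewrite in_cands. intros [->|(j & _ & ->)]; [lra|apply mpt_range]. Qed.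

Lemma low_spec p : In (m_low beta p) (cands beta p) /\ m_low beta p < mpt beta p /\
  forall x, In x (cands beta p) -> x < mpt beta p -> x <= m_low beta p.
Proof.
  pose proof (fl_spec (mpt beta p) (cands beta p)) as H.
  unfold m_low. change (fold_right _ None (cands beta p)) with (fl (mpt beta p) (cands beta p)).
  destruct (fl (mpt beta p) (cands beta p)); auto.
  exfalso. apply (H 0). simpl; auto. apply mpt_pos.
Qed.

Lemma up_spec p : (1 <= p)%nat -> In (m_up beta p) (cands beta p) /\ mpt beta p < m_up beta p /\
  forall x, In x (cands beta p) -> mpt beta p < x -> m_up beta p <= x.
Proof.
  intros Hp.
  pose proof (fu_spec (mpt beta p) (cands beta p)) as H.
  unfold m_up. change (fold_right _ None (cands beta p)) with (fu (mpt beta p) (cands beta p)).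
  destruct (fu (mpt beta p) (cands beta p)); auto.
  exfalso. apply (H (mpt beta 0)). apply in_cands. right; exists 0%nat; split; auto.
  destruct (mpt_range p). assert (mpt beta p <> mpt beta 0) by (apply hdist; lia).
  unfold mpt at 2 in H2; simpl in H2. unfold mpt at 2; simpl. lra.
Qed.

Lemma ord p : (1 <= p)%nat -> 0 <= m_low beta p /\ m_low beta p < mpt beta p /\
  mpt beta p < m_up beta p /\ m_up beta p <= beta / 2.
Proof.
  intros Hp. destruct (low_spec p) as (H1 & H2 & H3). destruct (up_spec p Hp) as (H4 & H5 & H6).
  pose proof (cands_range _ _ H1). pose proof (cands_range _ _ H4). lra.
Qed.

Definition good p x := x <= m_low beta p \/ m_up beta p <= x.

Lemma good_cands p x : (1 <= p)%nat -> In x (cands beta p) -> good p x.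
Proof.
  intros Hp Hx. destruct (low_spec p) as (H1 & H2 & H3). destruct (up_spec p Hp) as (H4 & H5 & H6).
  assert (x <> mpt beta p).
  { apply in_cands in Hx. destruct Hx as [->|(j & Hj & ->)].
    - intros E; apply (hdist0 p); auto.
    - apply hdist; lia. }
  unfold good. destruct (Rlt_dec x (mpt beta p)); [left; auto|right; apply H6; auto; lra].
Qed.

Lemma good_le0 p x : (1 <= p)%nat -> x <= 0 -> good p x.
Proof. intros Hp Hx. destruct (ord p Hp). left; lra. Qed.

Lemma good_ge p x : (1 <= p)%nat -> beta / 2 <= x -> good p x.
Proof. intros Hp Hx. destruct (ord p Hp) as (? & ? & ? & ?). right; lra. Qed.

Lemma cands_mono j k x : (j <= k)%nat -> In x (cands beta j) -> In x (cands beta k).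
Proof.
  intros H. rewrite !in_cands. intros [->|(i & Hi & ->)]; [left; auto|right; exists i; split; auto; lia].
Qed.

Lemma Tb_cands p x : In x (cands beta p) -> In (Tb beta x) (cands beta (S p)).
Proof.
  rewrite !in_cands. intros [->|(j & Hj & ->)].
  - left. unfold Tb. destruct (Rlt_dec 0 (1/2)); lra.
  - right. exists (S j). split; [lia|reflexivity].
Qed.


Definition psi_pts (q : nat) : list R :=
  match q with
  | O => [0; beta / 2]
  | S _ => [0; 1; m_low beta q; mpt beta q; m_up beta q]
  end.

Ltac fixl s x mid a b Hs Hx Hm :=
  rewrite (if_iff _ _ (Rle_dec s x) (Rle_dec s mid) _ _
     (side_l s a b x mid (Hs s ltac:(simpl; tauto)) Hx Hm)).
Ltac fixr s x mid a b Hs Hx Hm :=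
  rewrite (if_iff _ _ (Rle_dec x s) (Rle_dec mid s) _ _
     (side_r s a b x mid (Hs s ltac:(simpl; tauto)) Hx Hm)).

Lemma stepw_psi q : stepw (psi_pts q) (psi beta q).
Proof.
  intros a b Hab Hs. exists (psi beta q ((a+b)/2)). intros x Hx.
  assert (Hm : a < (a+b)/2 < b) by lra.
  destruct q as [|k]; unfold psi.
  - fixl 0 x ((a+b)/2) a b Hs Hx Hm. fixr (beta/2) x ((a+b)/2) a b Hs Hx Hm. reflexivity.
  - fixl 0 x ((a+b)/2) a b Hs Hx Hm. fixr 1 x ((a+b)/2) a b Hs Hx Hm.
    fixl (m_low beta (S k)) x ((a+b)/2) a b Hs Hx Hm.
    fixr (mpt beta (S k)) x ((a+b)/2) a b Hs Hx Hm.
    fixr (m_up beta (S k)) x ((a+b)/2) a b Hs Hx Hm. reflexivity.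
Qed.

Lemma psi_pts_spec m s : In s (psi_pts m) -> s = 1 \/ In s (cands beta (S m)).
Proof.
  destruct m as [|k]; intros H; simpl in H.
  - destruct H as [<-|[<-|[]]]; right; apply in_cands.
    + left; auto.
    + right; exists 0%nat; split; [lia|reflexivity].
  - destruct H as [<-|[<-|[<-|[<-|[<-|[]]]]]].
    + right; simpl; auto.
    + left; auto.
    + right. apply cands_mono with (S k); [lia|]. apply low_spec.
    + right. apply in_cands. right. exists (S k); split; [lia|auto].
    + right. apply cands_mono with (S k); [lia|]. apply up_spec; lia.
Qed.

Lemma div_le1 s a : beta * s <= a -> s <= a / beta.
Proof.
  intros H. replace s with ((beta * s) / beta) by (field; lra).
  apply Rmult_le_compat_r; [left; apply Rinv_0_lt_compat; lra|auto].
Qed.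
Lemma div_le2 s a : a <= beta * s -> a / beta <= s.
Proof.
  intros H. replace s with ((beta * s) / beta) by (field; lra).
  apply Rmult_le_compat_r; [left; apply Rinv_0_lt_compat; lra|auto].
Qed.
Lemma div_lt a b : a < b -> a / beta < b / beta.
Proof. intros H. apply Rmult_lt_compat_r; [apply Rinv_0_lt_compat; lra|auto]. Qed.

Lemma stepw_Lb S f : stepw S f ->
  stepw (0 :: beta / 2 :: map (fun s => beta * s) S ++ map (fun s => beta * (s - 1/2)) S) (Lb beta f).
Proof.
  intros Hf a b Hab Hs.
  destruct (Hf (a / beta) (b / beta)) as [c1 Hc1].
  { apply div_lt; auto. }
  { intros s Hs'. assert (H := Hs (beta * s) ltac:(right; right; apply in_or_app; left;
      apply (in_map (fun s => beta * s)); auto)).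
    destruct H; [left; apply div_le1|right; apply div_le2]; auto. }
  destruct (Hf (a / beta + 1/2) (b / beta + 1/2)) as [c2 Hc2].
  { pose proof (div_lt a b Hab); lra. }
  { intros s Hs'. assert (H := Hs (beta * (s - 1/2)) ltac:(right; right; apply in_or_app; right;
      apply (in_map (fun s => beta * (s - 1/2))); auto)).
    destruct H; [left; pose proof (div_le1 _ _ H)|right; pose proof (div_le2 _ _ H)]; lra. }
  exists (Lb beta f ((a+b)/2)). intros x Hx.
  assert (Hm : a < (a+b)/2 < b) by lra.
  unfold Lb. fixl 0 x ((a+b)/2) a b Hs Hx Hm. fixr (beta/2) x ((a+b)/2) a b Hs Hx Hm.
  assert (E : forall y, a < y < b -> f (y / beta) = c1 /\ f (y / beta + 1/2) = c2).
  { intros y Hy. pose proof (div_lt _ _ (proj1 Hy)). pose proof (div_lt _ _ (proj2 Hy)).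
    split; [apply Hc1|apply Hc2]; lra. }
  destruct (E x Hx) as [-> ->]. destruct (E _ Hm) as [-> ->]. reflexivity.
Qed.

Lemma key p g c d : (1 <= p)%nat ->
  (forall x, m_low beta p < x < mpt beta p -> g x = c) ->
  (forall x, mpt beta p < x < m_up beta p -> g x = d) ->
  is_RInt (fun x => psi beta p x * g x) 0 1 (Cp beta p * (c - d)).
Proof.
  intros Hp Hc Hd. destruct (ord p Hp) as (O1 & O2 & O3 & O4).
  destruct p as [|k]; [lia|].
  set (ml := m_low beta (S k)) in *. set (mp := mpt beta (S k)) in *. set (mu := m_up beta (S k)) in *.
  set (C := Cp beta (S k)).
  apply chasles with ml 0 (C * (c - d)).
  { replace 0 with (0 * (ml - 0)) at 2 by ring. apply int_const; auto.
    intros x Hx. cbv beta. unfold psi. fold ml mp mu C.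
    repeat match goal with |- context [Rle_dec ?u ?v] => destruct (Rle_dec u v) end;
    first [ring | lra]. }
  2: ring.
  apply chasles with mp (C / (mp - ml) * c * (mp - ml)) (C * (-d)).
  { apply int_const; [lra|].
    intros x Hx. cbv beta. rewrite (Hc x Hx). unfold psi. fold ml mp mu C.
    repeat match goal with |- context [Rle_dec ?u ?v] => destruct (Rle_dec u v) end;
    first [ring | lra]. }
  2: field; lra.
  apply chasles with mu (- (C / (mu - mp)) * d * (mu - mp)) (0 * (1 - mu)).
  { apply int_const; [lra|].
    intros x Hx. cbv beta. rewrite (Hd x Hx). unfold psi. fold ml mp mu C.
    repeat match goal with |- context [Rle_dec ?u ?v] => destruct (Rle_dec u v) end;
    first [ring | lra]. }
  { apply int_const; [lra|].
    intros x Hx. cbv beta. unfold psi. fold ml mp mu C.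
    repeat match goal with |- context [Rle_dec ?u ?v] => destruct (Rle_dec u v) end;
    first [ring | lra]. }
  field; lra.
Qed.

End S.

Lemma rint_val (f : R -> R) a b (l l' : R) : is_RInt f a b l -> l = l' -> is_RInt f a b l'.
Proof. now intros H <-. Qed.

Lemma ortho beta (hb1 : 1 < beta) (hb2 : beta < 2)
  (hdist0 : forall p : nat, mpt beta p <> 0)
  (hdist : forall i j : nat, i <> j -> mpt beta i <> mpt beta j) p q :
  (q < p)%nat -> is_RInt (fun x => psi beta p x * psi beta q x) 0 1 0.
Proof.
  intros Hqp. assert (Hp : (1 <= p)%nat) by lia.
  destruct (ord beta hb1 hb2 hdist0 hdist p Hp) as (O1 & O2 & O3 & O4).
  destruct (stepw_psi beta q (m_low beta p) (m_up beta p)) as [c Hc]; [lra| |].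
  { intros s Hs. apply psi_pts_spec in Hs; auto. destruct Hs as [->|Hs].
    - apply good_ge; auto; lra.
    - apply good_cands; auto. apply cands_mono with (S q); auto. }
  apply rint_val with (Cp beta p * (c - c)); [|ring].
  apply (key beta hb1 hb2 hdist0 hdist); auto; intros x Hx; apply Hc; lra.
Qed.


Theorem mainTheorem8 (beta : R) (hb1 : 1 < beta) (hb2 : beta < 2)
  (hdist0 : forall p : nat, mpt beta p <> 0)
  (hdist : forall i j : nat, i <> j -> mpt beta i <> mpt beta j) :
  (forall n m : nat,
     exists pr : Riemann_integrable (fun x => psi beta n x * psi beta m x) 0 1,
       RiemannInt pr = if Nat.eq_dec n m then 1 else 0)
  /\
  (forall n m : nat, (n > m + 1)%nat ->
     exists pr : Riemann_integrable (fun x => psi beta n x * Lb beta (psi beta m) x) 0 1,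
       RiemannInt pr = 0).
Proof.
  split.
  - intros n m. apply fin_int. destruct (Nat.eq_dec n m) as [<-|Hne].
    + destruct n as [|k].
      * assert (Hs : / sqrt (beta/2) * / sqrt (beta/2) = / (beta/2)).
        { rewrite <- Rinv_mult, sqrt_sqrt; lra. }
        apply chasles with (beta/2) (/ sqrt (beta/2) * / sqrt (beta/2) * (beta/2 - 0)) (0 * (1 - beta/2)).
        -- apply int_const; [lra|]. intros x Hx. cbv beta. unfold psi.
           repeat match goal with |- context [Rle_dec ?u ?v] => destruct (Rle_dec u v) end;
           first [ring | lra].
        -- apply int_const; [lra|]. intros x Hx. cbv beta. unfold psi.
           repeat match goal with |- context [Rle_dec ?u ?v] => destruct (Rle_dec u v) end;
           first [ring | lra].
        -- rewrite Hs. field. lra.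
      * assert (Hp : (1 <= S k)%nat) by lia.
        destruct (ord beta hb1 hb2 hdist0 hdist _ Hp) as (O1 & O2 & O3 & O4).
        set (ml := m_low beta (S k)) in *. set (mp := mpt beta (S k)) in *.
        set (mu := m_up beta (S k)) in *.
        assert (HC : Cp beta (S k) * Cp beta (S k) = (mp - ml) * (mu - mp) / (mu - ml)).
        { unfold Cp. fold ml mp mu. apply sqrt_sqrt.
          apply Rmult_le_pos; [apply Rmult_le_pos; lra|left; apply Rinv_0_lt_compat; lra]. }
        apply rint_val with (Cp beta (S k) * (Cp beta (S k) / (mp - ml) - - (Cp beta (S k) / (mu - mp)))).
        2:{ replace (Cp beta (S k) * (Cp beta (S k) / (mp - ml) - - (Cp beta (S k) / (mu - mp))))
              with (Cp beta (S k) * Cp beta (S k) * (/ (mp - ml) + / (mu - mp))) by (field; lra).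
            rewrite HC. field. lra. }
        apply (key beta hb1 hb2 hdist0 hdist); auto.
        -- intros x Hx. fold ml mp mu in Hx. unfold psi. fold ml mp mu.
           repeat match goal with |- context [Rle_dec ?u ?v] => destruct (Rle_dec u v) end;
           first [ring | lra].
        -- intros x Hx. fold ml mp mu in Hx. unfold psi. fold ml mp mu.
           repeat match goal with |- context [Rle_dec ?u ?v] => destruct (Rle_dec u v) end;
           first [ring | lra].
    + destruct (Nat.lt_gt_cases n m) as [[H|H] _]; [exact Hne| |].
      * apply is_RInt_ext with (fun x => psi beta m x * psi beta n x).
        -- intros x _; apply Rmult_comm.
        -- apply ortho; auto.
      * apply ortho; auto.
  - intros n m Hnm. apply fin_int. assert (Hp : (1 <= n)%nat) by lia.
    destruct (ord beta hb1 hb2 hdist0 hdist n Hp) as (O1 & O2 & O3 & O4).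
    assert (HT : forall s, In s (cands beta (S m)) -> good beta n (Tb beta s)).
    { intros s Hs. apply good_cands; auto. apply cands_mono with (S (S m)); [lia|].
      apply Tb_cands; auto. }
    destruct (stepw_Lb beta hb1 _ _ (stepw_psi beta m) (m_low beta n) (m_up beta n)) as [c Hc]; [lra| |].
    { intros s Hs. destruct Hs as [<-|[<-|Hs]].
      - apply good_le0; auto; lra.
      - apply good_ge; auto; lra.
      - apply in_app_or in Hs. destruct Hs as [Hs|Hs]; apply in_map_iff in Hs;
        destruct Hs as (t & <- & Ht); apply psi_pts_spec in Ht; auto.
        + destruct Ht as [->|Ht]; [apply good_ge; auto; lra|].
          destruct (Rlt_dec t (1/2)).
          * specialize (HT t Ht). unfold Tb in HT. destruct (Rlt_dec t (1/2)); [auto|contradiction].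
          * apply good_ge; auto. nra.
        + destruct Ht as [->|Ht]; [apply good_ge; auto; lra|].
          destruct (Rlt_dec t (1/2)).
          * apply good_le0; auto. nra.
          * specialize (HT t Ht). unfold Tb in HT. destruct (Rlt_dec t (1/2)); [contradiction|auto]. }
    apply rint_val with (Cp beta n * (c - c)); [|ring].
    apply (key beta hb1 hb2 hdist0 hdist); auto; intros x Hx; apply Hc; lra.
Qed.
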